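(* In the category $\mathbf{Lens}$, the classes of all monomorphisms, effective monomorphisms, regular monomorphisms, strong monomorphisms and extremal monomorphisms coincide.
   Context: A lens $F\colon \mathbf{A}\to\mathbf{B}$ between small categories consists of a functor $F\colon\mathbf{A}\to\mathbf{B}$ (the get functor) together with, for each object $A$ of $\mathbf{A}$, a function $\varphi_{F,A}$ from the set of morphisms of $\mathbf{B}$ with domain $FA$ to the set of morphisms of $\mathbf{A}$ with domain $A$, such that: $F(\varphi_{F,A}b)=b$; $\varphi_{F,A}(\mathrm{id}_{FA})=\mathrm{id}_A$; and $\varphi_{F,A}(b'\circ b)=\varphi_{F,A'}(b')\circ\varphi_{F,A}(b)$ whenever $b$ has domain $FA$, $A'$ is the codomain of $\varphi_{F,A}b$, and $b'$ has domain $FA'$. $\mathbf{Lens}$ is the category of small categories and lenses, with composite of $F\colon\mathbf{A}\to\mathbf{B}$, $G\colon\mathbf{B}\to\mathbf{C}$ having get functor $G\circ F$ and puts $\varphi_{G\circ F,A}(c)=\varphi_{F,A}(\varphi_{G,FA}(c))$. An effective monomorphism is one that is an equaliser of its cokernel pair. *)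

(* Defs.v *)
(** Small categories, single-sorted presentation: a type of objects, a type of
    morphisms, domain/codomain maps, identities and a composition [comp g f]
    (= g o f) which is only constrained on composable pairs ([cod f = dom g]). *)
Record Cat := {
  Ob : Type;
  Mor : Type;
  dom : Mor -> Ob;
  cod : Mor -> Ob;
  idm : Ob -> Mor;
  comp : Mor -> Mor -> Mor;
  dom_idm : forall x, dom (idm x) = x;
  cod_idm : forall x, cod (idm x) = x;
  dom_comp : forall f g, cod f = dom g -> dom (comp g f) = dom f;
  cod_comp : forall f g, cod f = dom g -> cod (comp g f) = cod g;
  comp_idl : forall f, comp (idm (cod f)) f = f;
  comp_idr : forall f, comp f (idm (dom f)) = f;
  comp_assoc : forall f g h, cod f = dom g -> cod g = dom h ->
      comp h (comp g f) = comp (comp h g) f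
}.

Arguments dom {c} _.
Arguments cod {c} _.
Arguments idm {c} _.
Arguments comp {c} _ _.

Definition MorFrom (C : Cat) (x : Ob C) : Type := { f : Mor C | dom f = x }.

(** Data of a lens A -> B: get functor (on objects and morphisms) and puts
    phi_{F,a} : {b | dom b = F a} -> {f | dom f = a}. *)
Record LensData (A B : Cat) := {
  lob : Ob A -> Ob B;
  lmor : Mor A -> Mor B;
  lput : forall a : Ob A, MorFrom B (lob a) -> MorFrom A a
}.

Arguments lob {A B} _ _.
Arguments lmor {A B} _ _.
Arguments lput {A B} _ _ _.

Definition is_lens {A B : Cat} (F : LensData A B) : Prop :=
  (forall f, dom (lmor F f) = lob F (dom f)) /\
  (forall f, cod (lmor F f) = lob F (cod f)) /\
  (forall x, lmor F (idm x) = idm (lob F x)) /\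
  (forall f g, cod f = dom g -> lmor F (comp g f) = comp (lmor F g) (lmor F f)) /\
  (forall a (b : MorFrom B (lob F a)), lmor F (proj1_sig (lput F a b)) = proj1_sig b) /\
  (forall a (h : dom (idm (lob F a)) = lob F a),
      proj1_sig (lput F a (exist _ (idm (lob F a)) h)) = idm a) /\
  (forall a (b : MorFrom B (lob F a)) (b' : Mor B)
          (h' : dom b' = lob F (cod (proj1_sig (lput F a b))))
          (h : dom (comp b' (proj1_sig b)) = lob F a),
      proj1_sig (lput F a (exist _ (comp b' (proj1_sig b)) h)) =
      comp (proj1_sig (lput F (cod (proj1_sig (lput F a b))) (exist _ b' h')))
           (proj1_sig (lput F a b))).

(** Morphisms of Lens from A to B are the lens data satisfying [is_lens]. *)

Definition lcomp {A B C : Cat} (G : LensData B C) (F : LensData A B) : LensData A C :=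
  {| lob := fun a => lob G (lob F a);
     lmor := fun f => lmor G (lmor F f);
     lput := fun a c => lput F a (lput G (lob F a) c) |}.

Definition lid (A : Cat) : LensData A A :=
  {| lob := fun a => a; lmor := fun f => f; lput := fun a b => b |}.

Definition Mono {A B : Cat} (m : LensData A B) : Prop :=
  forall (C : Cat) (f g : LensData C A), is_lens f -> is_lens g ->
    lcomp m f = lcomp m g -> f = g.

Definition Epi {A B : Cat} (e : LensData A B) : Prop :=
  forall (C : Cat) (f g : LensData B C), is_lens f -> is_lens g ->
    lcomp f e = lcomp g e -> f = g.

Definition Iso {A B : Cat} (e : LensData A B) : Prop :=
  exists g : LensData B A, is_lens g /\ lcomp g e = lid A /\ lcomp e g = lid B.

Definition IsEqualiser {E B C : Cat} (m : LensData E B) (f g : LensData B C) : Prop :=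
  is_lens m /\ lcomp f m = lcomp g m /\
  forall (X : Cat) (h : LensData X B), is_lens h -> lcomp f h = lcomp g h ->
    exists! k : LensData X E, is_lens k /\ lcomp m k = h.

Definition IsPushout {A B C P : Cat} (f : LensData A B) (g : LensData A C)
    (i : LensData B P) (j : LensData C P) : Prop :=
  is_lens i /\ is_lens j /\ lcomp i f = lcomp j g /\
  forall (Q : Cat) (u : LensData B Q) (v : LensData C Q), is_lens u -> is_lens v ->
    lcomp u f = lcomp v g ->
    exists! k : LensData P Q, is_lens k /\ lcomp k i = u /\ lcomp k j = v.

Definition EffectiveMono {A B : Cat} (m : LensData A B) : Prop :=
  exists (P : Cat) (i j : LensData B P), IsPushout m m i j /\ IsEqualiser m i j.

Definition RegularMono {A B : Cat} (m : LensData A B) : Prop :=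
  exists (C : Cat) (f g : LensData B C), is_lens f /\ is_lens g /\ IsEqualiser m f g.

Definition StrongMono {A B : Cat} (m : LensData A B) : Prop :=
  Mono m /\
  forall (X Y : Cat) (e : LensData X Y) (u : LensData X A) (v : LensData Y B),
    is_lens e -> Epi e -> is_lens u -> is_lens v ->
    lcomp m u = lcomp v e ->
    exists d : LensData Y A, is_lens d /\ lcomp d e = u /\ lcomp m d = v.

Definition ExtremalMono {A B : Cat} (m : LensData A B) : Prop :=
  Mono m /\
  forall (X : Cat) (e : LensData A X) (g : LensData X B),
    is_lens e -> is_lens g -> lcomp g e = m -> Epi e -> Iso e.

(* Main.v *)
Require Import Defs.
From Stdlib Require Import ClassicalEpsilon ProofIrrelevance FunctionalExtensionality Bool.

Lemma sig_eq {T : Type} {P : T -> Prop} (x y : {t | P t}) :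
  proj1_sig x = proj1_sig y -> x = y.
Proof. destruct x as [x hx], y as [y hy]; simpl; intros e; subst y.
  f_equal; apply proof_irrelevance. Qed.

Definition putraw {A B : Cat} (F : LensData A B) (a : Ob A) (c : Mor B) : Mor A :=
  match excluded_middle_informative (dom c = lob F a) with
  | left h => proj1_sig (lput F a (exist _ c h))
  | right _ => idm a
  end.

Lemma putraw_spec {A B : Cat} (F : LensData A B) a (c : MorFrom B (lob F a)) :
  proj1_sig (lput F a c) = putraw F a (proj1_sig c).
Proof. unfold putraw. destruct c as [c hc]; simpl.
  destruct (excluded_middle_informative (dom c = lob F a)) as [h|n].
  - do 3 f_equal; apply proof_irrelevance.
  - contradiction. Qed.

Lemma putraw_eq {A B : Cat} (F : LensData A B) a c (h : dom c = lob F a) :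
  putraw F a c = proj1_sig (lput F a (exist _ c h)).
Proof. rewrite putraw_spec. reflexivity. Qed.

Lemma putraw_dom {A B : Cat} (F : LensData A B) a c :
  dom c = lob F a -> dom (putraw F a c) = a.
Proof. intros h. rewrite (putraw_eq F a c h).
  exact (proj2_sig (lput F a (exist _ c h))). Qed.

Lemma lput_congr {A B : Cat} (F : LensData A B) a a' (c : MorFrom B (lob F a))
  (c' : MorFrom B (lob F a')) :
  a = a' -> proj1_sig c = proj1_sig c' ->
  proj1_sig (lput F a c) = proj1_sig (lput F a' c').
Proof. intros e ec; subst a'. rewrite (sig_eq c c' ec). reflexivity. Qed.

Section LensLaws.
Context {A B : Cat} {F : LensData A B} (H : is_lens F).
Lemma Ldom f : dom (lmor F f) = lob F (dom f). Proof. apply H. Qed.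
Lemma Lcod f : cod (lmor F f) = lob F (cod f). Proof. apply H. Qed.
Lemma Lid x : lmor F (idm x) = idm (lob F x). Proof. apply H. Qed.
Lemma Lcomp f g : cod f = dom g -> lmor F (comp g f) = comp (lmor F g) (lmor F f).
Proof. apply H. Qed.
Lemma Lputget a c : dom c = lob F a -> lmor F (putraw F a c) = c.
Proof. intros h. rewrite (putraw_eq F a c h). apply H. Qed.
Lemma Lputid a : putraw F a (idm (lob F a)) = idm a.
Proof. assert (h : dom (idm (lob F a)) = lob F a) by apply dom_idm.
  rewrite (putraw_eq F a _ h). apply H. Qed.
Lemma Lputcod a c : dom c = lob F a -> cod c = lob F (cod (putraw F a c)).
Proof. intros h. rewrite <- (Lputget a c h) at 1. apply Lcod. Qed.
Lemma Lputcomp a b b' : dom b = lob F a -> dom b' = lob F (cod (putraw F a b)) ->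
  putraw F a (comp b' b) = comp (putraw F (cod (putraw F a b)) b') (putraw F a b).
Proof. intros hb hb'.
  assert (h : dom (comp b' b) = lob F a).
  { rewrite dom_comp; auto. rewrite hb'. apply Lputcod; auto. }
  rewrite (putraw_eq F a _ h).
  destruct H as (_&_&_&_&_&_&P).
  pose (bb := exist (fun f => dom f = lob F a) b hb).
  assert (h' : dom b' = lob F (cod (proj1_sig (lput F a bb)))).
  { rewrite putraw_spec; exact hb'. }
  pose proof (P a bb b' h' h) as E. simpl in E. rewrite E.
  rewrite !putraw_spec. simpl. f_equal.
  all: try reflexivity.
  all: rewrite (putraw_spec F a bb); reflexivity.
Qed.
End LensLaws.

Lemma is_lens_intro {A B : Cat} (F : LensData A B) :
  (forall f, dom (lmor F f) = lob F (dom f)) ->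
  (forall f, cod (lmor F f) = lob F (cod f)) ->
  (forall x, lmor F (idm x) = idm (lob F x)) ->
  (forall f g, cod f = dom g -> lmor F (comp g f) = comp (lmor F g) (lmor F f)) ->
  (forall a c, dom c = lob F a -> lmor F (putraw F a c) = c) ->
  (forall a, putraw F a (idm (lob F a)) = idm a) ->
  (forall a b b', dom b = lob F a -> dom b' = lob F (cod (putraw F a b)) ->
     putraw F a (comp b' b) = comp (putraw F (cod (putraw F a b)) b') (putraw F a b)) ->
  is_lens F.
Proof.
  intros h1 h2 h3 h4 h5 h6 h7.
  repeat split; auto.
  - intros a [b hb]. rewrite putraw_spec. apply h5; auto.
  - intros a h. rewrite putraw_spec. apply h6.
  - intros a [b hb] b' h' h. rewrite !putraw_spec. simpl in *.
    rewrite putraw_spec in h'. simpl in h'. rewrite h7; auto.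
    f_equal. rewrite putraw_spec. reflexivity.
    rewrite (putraw_eq F a b hb); reflexivity.
Qed.

Lemma lens_eq {A B : Cat} (F G : LensData A B) :
  (forall a, lob F a = lob G a) -> (forall f, lmor F f = lmor G f) ->
  (forall a c, dom c = lob F a -> putraw F a c = putraw G a c) -> F = G.
Proof.
  destruct F as [o1 m1 p1], G as [o2 m2 p2]; simpl. intros Ho Hm Hp.
  assert (o1 = o2) by (apply functional_extensionality; auto). subst o2.
  assert (m1 = m2) by (apply functional_extensionality; auto). subst m2.
  assert (p1 = p2).
  { apply functional_extensionality_dep; intro a. apply functional_extensionality; intro c.
    apply sig_eq. destruct c as [c hc].
    pose proof (putraw_spec {| lob := o1; lmor := m1; lput := p1 |} a (exist _ c hc)) as E1.
    pose proof (putraw_spec {| lob := o1; lmor := m1; lput := p2 |} a (exist _ c hc)) as E2.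
    simpl in E1, E2. rewrite E1, E2. apply Hp. exact hc. }
  subst; reflexivity.
Qed.

Lemma lens_eq_inv {A B : Cat} (F G : LensData A B) : F = G ->
  (forall a, lob F a = lob G a) /\ (forall f, lmor F f = lmor G f) /\
  (forall a c, putraw F a c = putraw G a c).
Proof. intros <-; auto. Qed.

Lemma putraw_lcomp {A B C : Cat} (G : LensData B C) (F : LensData A B) a c :
  dom c = lob G (lob F a) ->
  putraw (lcomp G F) a c = putraw F a (putraw G (lob F a) c).
Proof. intros h. rewrite (putraw_eq (lcomp G F) a c h). simpl.
  rewrite putraw_spec. simpl. rewrite putraw_spec. reflexivity. Qed.

Lemma lcomp_lens {A B C : Cat} (G : LensData B C) (F : LensData A B) :
  is_lens F -> is_lens G -> is_lens (lcomp G F).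
Proof.
  intros HF HG. apply is_lens_intro; simpl.
  - intros f. rewrite (Ldom HG), (Ldom HF). reflexivity.
  - intros f. rewrite (Lcod HG), (Lcod HF). reflexivity.
  - intros x. rewrite (Lid HF), (Lid HG). reflexivity.
  - intros f g h. rewrite (Lcomp HF) by auto. rewrite (Lcomp HG). reflexivity.
    rewrite (Lcod HF), (Ldom HF), h. reflexivity.
  - intros a c h. rewrite putraw_lcomp by auto.
    rewrite (Lputget HF). apply (Lputget HG); auto. apply putraw_dom; auto.
  - intros a. rewrite putraw_lcomp by (apply dom_idm).
    rewrite (Lputid HG). apply (Lputid HF).
  - intros a b b' hb hb'.
    assert (hy : dom (putraw G (lob F a) b) = lob F a) by (apply putraw_dom; auto).
    pose proof (Lputcod HF a _ hy) as ecy.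
    pose proof (Lputcod HG _ _ hb) as ecb.
    rewrite putraw_lcomp in hb' by auto.
    rewrite !putraw_lcomp; auto.
    + rewrite (Lputcomp HG); auto.
      2:{ rewrite ecy. exact hb'. }
      rewrite ecy. rewrite (Lputcomp HF); auto. apply putraw_dom. exact hb'.
    + rewrite putraw_lcomp by auto. exact hb'.
    + rewrite dom_comp; auto. rewrite ecb, ecy, hb'. reflexivity.
Qed.

Lemma lid_lens (A : Cat) : is_lens (lid A).
Proof. apply is_lens_intro; simpl; auto.
  - intros a c h. rewrite (putraw_eq (lid A) a c h). simpl. reflexivity.
  - intros a. rewrite (putraw_eq (lid A) a _ (dom_idm _ a)). reflexivity.
  - intros a b b' hb hb'.
    assert (hb'' : dom b' = cod b).
    { rewrite hb'. f_equal. rewrite (putraw_eq (lid A) a b hb). reflexivity. }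
    assert (hc : dom (comp b' b) = a) by (rewrite dom_comp; auto).
    rewrite (putraw_eq (lid A) _ b' hb').
    rewrite (putraw_eq (lid A) a _ hc). simpl. f_equal.
    rewrite (putraw_eq (lid A) a b hb). reflexivity.
Qed.

Lemma lcomp_lid_r {A B : Cat} (F : LensData A B) : lcomp F (lid A) = F.
Proof. destruct F; reflexivity. Qed.
Lemma lcomp_lid_l {A B : Cat} (F : LensData A B) : lcomp (lid B) F = F.
Proof. destruct F; reflexivity. Qed.

Lemma eq_mono {E B C : Cat} (m : LensData E B) (f g : LensData B C) :
  IsEqualiser m f g -> Mono m.
Proof.
  intros (Hm & Heq & U) X u v Hu Hv Huv.
  assert (Hh : is_lens (lcomp m u)) by (apply lcomp_lens; auto).
  assert (E1 : lcomp f (lcomp m u) = lcomp g (lcomp m u)).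
  { change (lcomp (lcomp f m) u = lcomp (lcomp g m) u). rewrite Heq. reflexivity. }
  destruct (U X (lcomp m u) Hh E1) as (k & _ & Uk).
  transitivity k; [symmetry|]; apply Uk; auto.
Qed.

Lemma regular_strong {A B : Cat} (m : LensData A B) : RegularMono m -> StrongMono m.
Proof.
  intros (C & f & g & Hf & Hg & HE).
  pose proof (eq_mono _ _ _ HE) as Mm.
  destruct HE as (Hm & Heq & U).
  split; auto.
  intros X Y e u v He Epe Hu Hv Hsq.
  assert (E1 : lcomp f v = lcomp g v).
  { apply Epe; try (apply lcomp_lens; auto).
    change (lcomp f (lcomp v e) = lcomp g (lcomp v e)). rewrite <- Hsq.
    change (lcomp (lcomp f m) u = lcomp (lcomp g m) u). rewrite Heq. reflexivity. }
  destruct (U Y v Hv E1) as (k & (Hk & Hmk) & _).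
  exists k. split; auto. split; auto.
  apply Mm; [apply lcomp_lens; auto | auto | ].
  change (lcomp (lcomp m k) e = lcomp m u). rewrite Hmk. auto.
Qed.

Lemma strong_extremal {A B : Cat} (m : LensData A B) : is_lens m -> StrongMono m -> ExtremalMono m.
Proof.
  intros Hm (Mm & S). split; auto.
  intros X e g He Hg Hge Epe.
  destruct (S A X e (lid A) g He Epe (lid_lens A) Hg) as (d & Hd & Hde & Hmd).
  { rewrite lcomp_lid_r. auto. }
  exists d. split; auto. split; auto.
  apply Epe; [apply lcomp_lens; auto | apply lid_lens | ].
  change (lcomp e (lcomp d e) = lcomp (lid X) e). rewrite Hde, lcomp_lid_r, lcomp_lid_l. reflexivity.
Qed.

Lemma effective_regular {A B : Cat} (m : LensData A B) : EffectiveMono m -> RegularMono m.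
Proof.
  intros (P & i & j & (Hi & Hj & _) & HE). exists P, i, j. auto.
Qed.

Lemma regular_mono {A B : Cat} (m : LensData A B) : RegularMono m -> Mono m.
Proof. intros (C & f & g & _ & _ & HE). exact (eq_mono _ _ _ HE). Qed.

Section Kernel.
Context {A B : Cat} (m : LensData A B) (Hm : is_lens m).

Definition KOb := {p : Ob A * Ob A | lob m (fst p) = lob m (snd p)}.
Definition KMor := {q : Mor A * Mor A | lmor m (fst q) = lmor m (snd q)}.

Lemma Kdom_pf (q : KMor) : lob m (dom (fst (proj1_sig q))) = lob m (dom (snd (proj1_sig q))).
Proof. rewrite <- !(Ldom Hm). f_equal. exact (proj2_sig q). Qed.
Lemma Kcod_pf (q : KMor) : lob m (cod (fst (proj1_sig q))) = lob m (cod (snd (proj1_sig q))).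
Proof. rewrite <- !(Lcod Hm). f_equal. exact (proj2_sig q). Qed.
Lemma Kid_pf (p : KOb) : lmor m (idm (fst (proj1_sig p))) = lmor m (idm (snd (proj1_sig p))).
Proof. rewrite !(Lid Hm). f_equal. exact (proj2_sig p). Qed.

Definition Kdom (q : KMor) : KOb :=
  exist _ (dom (fst (proj1_sig q)), dom (snd (proj1_sig q))) (Kdom_pf q).
Definition Kcod (q : KMor) : KOb :=
  exist _ (cod (fst (proj1_sig q)), cod (snd (proj1_sig q))) (Kcod_pf q).
Definition Kid (p : KOb) : KMor :=
  exist _ (idm (fst (proj1_sig p)), idm (snd (proj1_sig p))) (Kid_pf p).
Definition Kcomp (q' q : KMor) : KMor :=
  let c1 := comp (fst (proj1_sig q')) (fst (proj1_sig q)) in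
  let c2 := comp (snd (proj1_sig q')) (snd (proj1_sig q)) in
  match excluded_middle_informative (lmor m c1 = lmor m c2) with
  | left h => exist (fun q => lmor m (fst q) = lmor m (snd q)) (c1, c2) h
  | right _ => q
  end.

Lemma Kcod_dom (q q' : KMor) : Kcod q = Kdom q' ->
  cod (fst (proj1_sig q)) = dom (fst (proj1_sig q')) /\
  cod (snd (proj1_sig q)) = dom (snd (proj1_sig q')).
Proof. intros e. apply (f_equal (@proj1_sig _ _)) in e. simpl in e.
  inversion e. auto. Qed.

Lemma Kcomp_eq (q q' : KMor) : Kcod q = Kdom q' ->
  proj1_sig (Kcomp q' q) = (comp (fst (proj1_sig q')) (fst (proj1_sig q)),
                            comp (snd (proj1_sig q')) (snd (proj1_sig q))).
Proof. intros e. destruct (Kcod_dom q q' e) as [e1 e2].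
  unfold Kcomp. destruct excluded_middle_informative as [h|n]; [reflexivity|].
  exfalso. apply n. rewrite !(Lcomp Hm) by auto. f_equal; exact (proj2_sig q') || exact (proj2_sig q).
Qed.

Definition KCat : Cat.
Proof.
  refine {| Ob := KOb; Mor := KMor; dom := Kdom; cod := Kcod; idm := Kid; comp := Kcomp |}.
  - intros x. apply sig_eq. simpl. rewrite !dom_idm. destruct x as [[]]; reflexivity.
  - intros x. apply sig_eq. simpl. rewrite !cod_idm. destruct x as [[]]; reflexivity.
  - intros f g e. apply sig_eq. destruct (Kcod_dom f g e) as [e1 e2].
    unfold Kdom at 1. simpl. rewrite (Kcomp_eq f g e). simpl. rewrite !dom_comp; auto.
  - intros f g e. apply sig_eq. destruct (Kcod_dom f g e) as [e1 e2].
    unfold Kcod at 1. simpl. rewrite (Kcomp_eq f g e). simpl. rewrite !cod_comp; auto.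
  - intros f. apply sig_eq. rewrite Kcomp_eq. simpl. rewrite !comp_idl. destruct f as [[]]; reflexivity.
    apply sig_eq; simpl. rewrite !dom_idm. reflexivity.
  - intros f. apply sig_eq. rewrite Kcomp_eq. simpl. rewrite !comp_idr. destruct f as [[]]; reflexivity.
    apply sig_eq; simpl. rewrite !cod_idm. reflexivity.
  - intros f g h e1 e2. apply sig_eq.
    destruct (Kcod_dom f g e1) as [e11 e12]. destruct (Kcod_dom g h e2) as [e21 e22].
    assert (e3 : Kcod (Kcomp g f) = Kdom h).
    { apply sig_eq. simpl. rewrite (Kcomp_eq f g e1). simpl. rewrite !cod_comp; auto.
      apply (f_equal (@proj1_sig _ _)) in e2. exact e2. }
    assert (e4 : Kcod f = Kdom (Kcomp h g)).
    { apply sig_eq. simpl. rewrite (Kcomp_eq g h e2). simpl. rewrite !dom_comp; auto.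
      apply (f_equal (@proj1_sig _ _)) in e1. exact e1. }
    rewrite (Kcomp_eq _ _ e3), (Kcomp_eq _ _ e4). simpl.
    rewrite (Kcomp_eq f g e1), (Kcomp_eq g h e2). simpl.
    rewrite !comp_assoc; auto.
Defined.
End Kernel.

Section Proj.
Context {A B : Cat} (m : LensData A B) (Hm : is_lens m).

Let K := KCat m Hm.

Lemma pi1_pf1 (p : Ob K) (c : MorFrom A (fst (proj1_sig p))) :
  lmor m (fst (proj1_sig c, putraw m (snd (proj1_sig p)) (lmor m (proj1_sig c)))) =
  lmor m (snd (proj1_sig c, putraw m (snd (proj1_sig p)) (lmor m (proj1_sig c)))).
Proof. simpl. rewrite (Lputget Hm); auto. rewrite (Ldom Hm), (proj2_sig c). exact (proj2_sig p). Qed.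

Definition pi1_q (p : Ob K) (c : MorFrom A (fst (proj1_sig p))) : Mor K :=
  exist _ _ (pi1_pf1 p c).

Lemma pi1_pf2 (p : Ob K) (c : MorFrom A (fst (proj1_sig p))) : dom (pi1_q p c) = p.
Proof. apply sig_eq. simpl. destruct p as [[p1 p2] hp]; simpl in *.
  rewrite (proj2_sig c). f_equal. apply putraw_dom. rewrite (Ldom Hm), (proj2_sig c). exact hp. Qed.

Definition pi1 : LensData K A :=
  {| lob := fun p : Ob K => fst (proj1_sig p);
     lmor := fun q : Mor K => fst (proj1_sig q);
     lput := fun p c => exist _ (pi1_q p c) (pi1_pf2 p c) |}.

Lemma pi2_pf1 (p : Ob K) (c : MorFrom A (snd (proj1_sig p))) :
  lmor m (fst (putraw m (fst (proj1_sig p)) (lmor m (proj1_sig c)), proj1_sig c)) =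
  lmor m (snd (putraw m (fst (proj1_sig p)) (lmor m (proj1_sig c)), proj1_sig c)).
Proof. simpl. rewrite (Lputget Hm); auto. rewrite (Ldom Hm), (proj2_sig c). symmetry. exact (proj2_sig p). Qed.

Definition pi2_q (p : Ob K) (c : MorFrom A (snd (proj1_sig p))) : Mor K :=
  exist _ _ (pi2_pf1 p c).

Lemma pi2_pf2 (p : Ob K) (c : MorFrom A (snd (proj1_sig p))) : dom (pi2_q p c) = p.
Proof. apply sig_eq. simpl. destruct p as [[p1 p2] hp]; simpl in *.
  rewrite (proj2_sig c). f_equal. apply putraw_dom. rewrite (Ldom Hm), (proj2_sig c). symmetry; exact hp. Qed.

Definition pi2 : LensData K A :=
  {| lob := fun p : Ob K => snd (proj1_sig p);
     lmor := fun q : Mor K => snd (proj1_sig q);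
     lput := fun p c => exist _ (pi2_q p c) (pi2_pf2 p c) |}.

Lemma pi1_put p c : dom c = fst (proj1_sig p) ->
  proj1_sig (putraw pi1 p c) = (c, putraw m (snd (proj1_sig p)) (lmor m c)).
Proof. intros h. rewrite (putraw_eq pi1 p c h). reflexivity. Qed.
Lemma pi2_put p c : dom c = snd (proj1_sig p) ->
  proj1_sig (putraw pi2 p c) = (putraw m (fst (proj1_sig p)) (lmor m c), c).
Proof. intros h. rewrite (putraw_eq pi2 p c h). reflexivity. Qed.

Lemma pi1_lens : is_lens pi1.
Proof.
  apply is_lens_intro; simpl.
  - reflexivity.
  - reflexivity.
  - reflexivity.
  - intros f g e. destruct (Kcod_dom m Hm f g e). rewrite (Kcomp_eq m Hm); auto.
  - intros a c h. rewrite pi1_put; auto.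
  - intros a. apply sig_eq. rewrite pi1_put by apply dom_idm. simpl.
    rewrite (Lid Hm). destruct a as [[a1 a2] ha]; simpl in *. rewrite ha.
    rewrite (Lputid Hm). reflexivity.
  - intros a b b' hb hb'.
    assert (hd : forall p c, dom c = fst (proj1_sig p) -> dom (putraw pi1 p c) = p)
      by (intros; apply putraw_dom; auto).
    assert (e : Kcod m Hm (putraw pi1 a b) = Kdom m Hm (putraw pi1 (Kcod m Hm (putraw pi1 a b)) b')).
    { symmetry. apply hd. exact hb'. }
    apply sig_eq. cbn [comp KCat]. rewrite (Kcomp_eq m Hm _ _ e).
    rewrite !pi1_put; auto.
    2:{ rewrite dom_comp; auto. rewrite hb'. simpl. rewrite pi1_put; auto. }
    simpl. rewrite !pi1_put; auto. simpl in hb'. rewrite pi1_put in hb' by auto. simpl in hb'.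
    destruct a as [[a1 a2] ha]; simpl in *.
    rewrite (Lcomp Hm) by auto.
    rewrite (Lputcomp Hm); auto.
    + rewrite (Ldom Hm), hb. exact ha.
    + rewrite (Ldom Hm), hb'. rewrite <- (Lcod Hm). rewrite <- (Lcod Hm).
      rewrite (Lputget Hm); auto. rewrite (Ldom Hm), hb. exact ha.
Qed.

Lemma pi2_lens : is_lens pi2.
Proof.
  apply is_lens_intro; simpl.
  - reflexivity.
  - reflexivity.
  - reflexivity.
  - intros f g e. destruct (Kcod_dom m Hm f g e). rewrite (Kcomp_eq m Hm); auto.
  - intros a c h. rewrite pi2_put; auto.
  - intros a. apply sig_eq. rewrite pi2_put by apply dom_idm. simpl.
    rewrite (Lid Hm). destruct a as [[a1 a2] ha]; simpl in *. rewrite <- ha.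
    rewrite (Lputid Hm). reflexivity.
  - intros a b b' hb hb'.
    assert (hd : forall p c, dom c = snd (proj1_sig p) -> dom (putraw pi2 p c) = p)
      by (intros; apply putraw_dom; auto).
    assert (e : Kcod m Hm (putraw pi2 a b) = Kdom m Hm (putraw pi2 (Kcod m Hm (putraw pi2 a b)) b')).
    { symmetry. apply hd. exact hb'. }
    apply sig_eq. cbn [comp KCat]. rewrite (Kcomp_eq m Hm _ _ e).
    rewrite !pi2_put; auto.
    2:{ rewrite dom_comp; auto. rewrite hb'. simpl. rewrite pi2_put; auto. }
    simpl. rewrite !pi2_put; auto. simpl in hb'. rewrite pi2_put in hb' by auto. simpl in hb'.
    destruct a as [[a1 a2] ha]; simpl in *.
    rewrite (Lcomp Hm) by auto.
    rewrite (Lputcomp Hm); auto.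
    + rewrite (Ldom Hm), hb. symmetry; exact ha.
    + rewrite (Ldom Hm), hb'. rewrite <- (Lcod Hm). rewrite <- (Lcod Hm).
      rewrite (Lputget Hm); auto. rewrite (Ldom Hm), hb. symmetry; exact ha.
Qed.

Lemma pi_eq : lcomp m pi1 = lcomp m pi2.
Proof.
  apply lens_eq; simpl.
  - intros p. exact (proj2_sig p).
  - intros q. exact (proj2_sig q).
  - intros p c h. rewrite !putraw_lcomp; simpl; auto.
    2:{ rewrite h. exact (proj2_sig p). }
    apply sig_eq. destruct p as [[p1 p2] hp]; simpl in *.
    rewrite pi1_put, pi2_put; simpl.
    + rewrite !(Lputget Hm); auto. rewrite <- hp; auto.
    + apply putraw_dom. rewrite <- hp; auto.
    + apply putraw_dom. auto.
Qed.

Lemma mono_facts : Mono m ->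
  (forall a1 a2, lob m a1 = lob m a2 -> a1 = a2) /\
  (forall w, putraw m (dom w) (lmor m w) = w).
Proof.
  intros M. pose proof (M K pi1 pi2 pi1_lens pi2_lens pi_eq) as E.
  split.
  - intros a1 a2 h. pose (p := exist (fun p => lob m (fst p) = lob m (snd p)) (a1, a2) h : Ob K).
    exact (f_equal (fun F => lob F p) E).
  - intros w.
    assert (h : lmor m (fst (w, putraw m (dom w) (lmor m w))) = lmor m (snd (w, putraw m (dom w) (lmor m w)))).
    { simpl. rewrite (Lputget Hm); auto. apply (Ldom Hm). }
    pose (q := exist _ _ h : Mor K).
    symmetry. exact (f_equal (fun F => lmor F q) E).
Qed.
End Proj.

Section Cokernel.
Context {A B : Cat} (m : LensData A B) (Hm : is_lens m).

Definition img (b : Ob B) : Prop := exists a, lob m a = b.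
Definition imgb (b : Ob B) : bool :=
  if excluded_middle_informative (img b) then true else false.

Lemma imgbT b : imgb b = true <-> img b.
Proof. unfold imgb. destruct excluded_middle_informative; split; auto; discriminate. Qed.
Lemma imgbF b : imgb b = false <-> ~ img b.
Proof. unfold imgb. destruct excluded_middle_informative; split; auto; try discriminate; tauto. Qed.

Lemma up_img f : img (dom f) -> img (cod f).
Proof. intros [a ha]. exists (cod (putraw m a f)). symmetry. apply (Lputcod Hm). auto. Qed.
Lemma up_imgb f : imgb (dom f) = true -> imgb (cod f) = true.
Proof. rewrite !imgbT. apply up_img. Qed.

Lemma orb_img (t : bool) b : (img b -> t = true) -> (t || imgb b) = t.
Proof. intros h. destruct (imgb b) eqn:E.
  - apply imgbT in E. rewrite (h E). reflexivity.
  - apply orb_false_r. Qed.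

Definition POb := {p : Ob B * bool | img (fst p) -> snd p = true}.
Definition PMor := {q : Mor B * bool | img (dom (fst q)) -> snd q = true}.

Definition Pdom (q : PMor) : POb :=
  exist (fun p : Ob B * bool => img (fst p) -> snd p = true)
    (dom (fst (proj1_sig q)), snd (proj1_sig q)) (proj2_sig q).

Lemma Pcod_pf (q : PMor) : img (cod (fst (proj1_sig q))) ->
  (snd (proj1_sig q) || imgb (cod (fst (proj1_sig q)))) = true.
Proof. intros h. apply imgbT in h. rewrite h. apply orb_true_r. Qed.
Definition Pcod (q : PMor) : POb :=
  exist (fun p : Ob B * bool => img (fst p) -> snd p = true)
    (cod (fst (proj1_sig q)), snd (proj1_sig q) || imgb (cod (fst (proj1_sig q)))) (Pcod_pf q).

Lemma Pid_pf (p : POb) : img (dom (idm (fst (proj1_sig p)))) -> snd (proj1_sig p) = true.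
Proof. rewrite dom_idm. exact (proj2_sig p). Qed.
Definition Pid (p : POb) : PMor :=
  exist (fun q : Mor B * bool => img (dom (fst q)) -> snd q = true)
    (idm (fst (proj1_sig p)), snd (proj1_sig p)) (Pid_pf p).

Lemma Pcomp_pf (q' q : PMor) :
  img (dom (comp (fst (proj1_sig q')) (fst (proj1_sig q)))) ->
  (snd (proj1_sig q) || imgb (dom (comp (fst (proj1_sig q')) (fst (proj1_sig q))))) = true.
Proof. intros h. apply imgbT in h. rewrite h. apply orb_true_r. Qed.
Definition Pcomp (q' q : PMor) : PMor :=
  exist (fun q : Mor B * bool => img (dom (fst q)) -> snd q = true)
    (comp (fst (proj1_sig q')) (fst (proj1_sig q)),
     snd (proj1_sig q) || imgb (dom (comp (fst (proj1_sig q')) (fst (proj1_sig q))))) (Pcomp_pf q' q).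

Lemma Pcod_dom (q q' : PMor) : Pcod q = Pdom q' ->
  cod (fst (proj1_sig q)) = dom (fst (proj1_sig q')) /\
  (snd (proj1_sig q) || imgb (cod (fst (proj1_sig q)))) = snd (proj1_sig q').
Proof. intros e. apply (f_equal (@proj1_sig _ _)) in e. simpl in e.
  inversion e. auto. Qed.

Lemma Pcomp_eq (q q' : PMor) : Pcod q = Pdom q' ->
  proj1_sig (Pcomp q' q) = (comp (fst (proj1_sig q')) (fst (proj1_sig q)), snd (proj1_sig q)).
Proof. intros e. destruct (Pcod_dom q q' e) as [e1 e2]. simpl.
  rewrite dom_comp by auto. f_equal. apply orb_img. exact (proj2_sig q). Qed.

Lemma Pdom_eq q : proj1_sig (Pdom q) = (dom (fst (proj1_sig q)), snd (proj1_sig q)).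
Proof. reflexivity. Qed.
Lemma Pcod_eq q : proj1_sig (Pcod q) =
  (cod (fst (proj1_sig q)), snd (proj1_sig q) || imgb (cod (fst (proj1_sig q)))).
Proof. reflexivity. Qed.

Definition PCat : Cat.
Proof.
  refine {| Ob := POb; Mor := PMor; dom := Pdom; cod := Pcod; idm := Pid; comp := Pcomp |}.
  - intros x. apply sig_eq. simpl. rewrite !dom_idm. destruct x as [[]]; reflexivity.
  - intros x. apply sig_eq. simpl. rewrite !cod_idm. destruct x as [[b t] h]; simpl.
    f_equal. apply orb_img. exact h.
  - intros f g e. apply sig_eq. destruct (Pcod_dom f g e) as [e1 e2].
    rewrite Pdom_eq, (Pcomp_eq f g e). simpl. rewrite !dom_comp; auto.
  - intros f g e. apply sig_eq. destruct (Pcod_dom f g e) as [e1 e2].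
    rewrite !Pcod_eq, (Pcomp_eq f g e). simpl. rewrite !cod_comp; auto.
    f_equal. rewrite <- e2. rewrite e1.
    destruct (imgb (dom (fst (proj1_sig g)))) eqn:E.
    + rewrite (up_imgb _ E). rewrite !orb_true_r. reflexivity.
    + rewrite orb_false_r. reflexivity.
  - intros f. apply sig_eq. rewrite Pcomp_eq. simpl. rewrite !comp_idl. destruct f as [[]]; reflexivity.
    apply sig_eq; simpl. rewrite !dom_idm. reflexivity.
  - intros f. apply sig_eq. rewrite Pcomp_eq. simpl. rewrite !comp_idr. destruct f as [[]]; reflexivity.
    apply sig_eq; simpl. rewrite !cod_idm. destruct f as [[b t] h]; simpl.
    f_equal. apply orb_img. exact h.
  - intros f g h e1 e2.
    destruct (Pcod_dom f g e1) as [e11 e12]. destruct (Pcod_dom g h e2) as [e21 e22].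
    assert (e3 : Pcod (Pcomp g f) = Pdom h).
    { apply sig_eq. rewrite Pcod_eq, Pdom_eq, (Pcomp_eq f g e1). simpl. rewrite !cod_comp; auto.
      rewrite <- e22, <- e12, e11. f_equal; [exact e21|].
      destruct (imgb (dom (fst (proj1_sig g)))) eqn:E.
      + rewrite (up_imgb _ E). rewrite !orb_true_r. reflexivity.
      + rewrite orb_false_r. reflexivity. }
    assert (e4 : Pcod f = Pdom (Pcomp h g)).
    { apply sig_eq. rewrite Pcod_eq, Pdom_eq, (Pcomp_eq g h e2). simpl. rewrite !dom_comp; auto.
      apply (f_equal (@proj1_sig _ _)) in e1. exact e1. }
    apply sig_eq.
    rewrite (Pcomp_eq _ _ e3), (Pcomp_eq _ _ e4). simpl.
    rewrite !comp_assoc; auto. f_equal. rewrite dom_comp by auto.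
    apply orb_img. exact (proj2_sig f).
Defined.

End Cokernel.

Section Inj.
Context {A B : Cat} (m : LensData A B) (Hm : is_lens m).
Let P := PCat m Hm.

Definition i_ob (b : Ob B) : Ob P :=
  exist (fun p : Ob B * bool => img m (fst p) -> snd p = true) (b, true) (fun _ => eq_refl).
Definition i_mor (f : Mor B) : Mor P :=
  exist (fun q : Mor B * bool => img m (dom (fst q)) -> snd q = true) (f, true) (fun _ => eq_refl).
Lemma i_pf (b : Ob B) (c : MorFrom P (i_ob b)) : dom (fst (proj1_sig (proj1_sig c))) = b.
Proof. exact (f_equal (fun p : Ob P => fst (proj1_sig p)) (proj2_sig c)). Qed.
Definition iL : LensData B P :=
  {| lob := i_ob; lmor := i_mor;
     lput := fun b c => exist _ (fst (proj1_sig (proj1_sig c))) (i_pf b c) |}.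

Lemma j_ob_pf (b : Ob B) : img m b -> imgb m b = true.
Proof. apply imgbT. Qed.
Definition j_ob (b : Ob B) : Ob P :=
  exist (fun p : Ob B * bool => img m (fst p) -> snd p = true) (b, imgb m b) (j_ob_pf b).
Definition j_mor (f : Mor B) : Mor P :=
  exist (fun q : Mor B * bool => img m (dom (fst q)) -> snd q = true) (f, imgb m (dom f)) (j_ob_pf (dom f)).
Lemma j_pf (b : Ob B) (c : MorFrom P (j_ob b)) : dom (fst (proj1_sig (proj1_sig c))) = b.
Proof. exact (f_equal (fun p : Ob P => fst (proj1_sig p)) (proj2_sig c)). Qed.
Definition jL : LensData B P :=
  {| lob := j_ob; lmor := j_mor;
     lput := fun b c => exist _ (fst (proj1_sig (proj1_sig c))) (j_pf b c) |}.

Lemma iL_put b c : dom c = lob iL b -> putraw iL b c = fst (proj1_sig c).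
Proof. intros h. rewrite (putraw_eq iL b c h). reflexivity. Qed.
Lemma jL_put b c : dom c = lob jL b -> putraw jL b c = fst (proj1_sig c).
Proof. intros h. rewrite (putraw_eq jL b c h). reflexivity. Qed.

Lemma domP_fst (q : Mor P) p : dom q = p -> dom (fst (proj1_sig q)) = fst (proj1_sig p).
Proof. intros <-. reflexivity. Qed.
Lemma domP_snd (q : Mor P) p : dom q = p -> snd (proj1_sig q) = snd (proj1_sig p).
Proof. intros <-. reflexivity. Qed.

Lemma iL_lens : is_lens iL.
Proof.
  apply is_lens_intro.
  - intros f. apply sig_eq. reflexivity.
  - intros f. apply sig_eq. reflexivity.
  - intros x. apply sig_eq. reflexivity.
  - intros f g e. apply sig_eq. simpl. reflexivity.
  - intros a c h. rewrite iL_put by auto. apply sig_eq. simpl.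
    destruct c as [[c t] hc]; simpl in *. f_equal. symmetry. exact (domP_snd _ _ h).
  - intros a. rewrite iL_put by apply dom_idm. reflexivity.
  - intros a b b' hb hb'. rewrite !iL_put; auto.
    rewrite (dom_comp P); [exact hb|].
    rewrite hb'. rewrite iL_put by auto. apply sig_eq. simpl.
    rewrite (domP_snd _ _ hb). reflexivity.
Qed.

Lemma jL_lens : is_lens jL.
Proof.
  apply is_lens_intro.
  - intros f. apply sig_eq. reflexivity.
  - intros f. apply sig_eq. simpl. f_equal.
    destruct (imgb m (dom f)) eqn:E; simpl; auto.
    symmetry. apply (up_imgb m Hm _ E).
  - intros x. apply sig_eq. simpl. rewrite dom_idm. reflexivity.
  - intros f g e. apply sig_eq. simpl. rewrite dom_comp by auto.
    rewrite orb_diag. reflexivity.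
  - intros a c h. rewrite jL_put by auto. apply sig_eq. simpl.
    pose proof (domP_fst _ _ h) as h1. pose proof (domP_snd _ _ h) as h2.
    destruct c as [[c t] hc]; simpl in *. rewrite h1, h2. reflexivity.
  - intros a. rewrite jL_put by apply dom_idm. reflexivity.
  - intros a b b' hb hb'. rewrite !jL_put; auto.
    rewrite (dom_comp P); [exact hb|].
    rewrite hb'. rewrite jL_put by auto. apply sig_eq. simpl.
    rewrite (domP_snd _ _ hb). simpl. pose proof (domP_fst _ _ hb) as h1. simpl in h1.
    rewrite <- h1. f_equal.
    destruct (imgb m (dom (fst (proj1_sig b)))) eqn:E; simpl; auto.
    symmetry. apply (up_imgb m Hm _ E).
Qed.

Lemma img_m a : img m (lob m a).
Proof. exists a; reflexivity. Qed.

Lemma ij_eq : lcomp iL m = lcomp jL m.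
Proof.
  apply lens_eq.
  - intros a. apply sig_eq. simpl. f_equal. symmetry. apply imgbT. apply img_m.
  - intros f. apply sig_eq. simpl. f_equal. symmetry. apply imgbT.
    rewrite (Ldom Hm). apply img_m.
  - intros a c h.
    assert (h' : dom c = lob jL (lob m a)).
    { rewrite h. apply sig_eq. simpl. f_equal. symmetry. apply imgbT. apply img_m. }
    rewrite (putraw_lcomp iL m a c h), (putraw_lcomp jL m a c h').
    rewrite iL_put, jL_put by auto. reflexivity.
Qed.

End Inj.

Section Push.
Context {A B Q : Cat} (m : LensData A B) (Hm : is_lens m)
  (u v : LensData B Q) (Hu : is_lens u) (Hv : is_lens v) (Huv : lcomp u m = lcomp v m).
Local Notation P := (PCat m Hm).

Lemma ob_uv b : img m b -> lob u b = lob v b.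
Proof. intros [a <-]. destruct (lens_eq_inv _ _ Huv) as (E & _). apply E. Qed.
Lemma mor_uv f : img m (dom f) -> lmor u f = lmor v f.
Proof. intros [a ha]. rewrite <- ((Lputget Hm) a f) by auto.
  destruct (lens_eq_inv _ _ Huv) as (_ & E & _). apply E. Qed.
Lemma put_uv b c : img m b -> dom c = lob u b -> putraw u b c = putraw v b c.
Proof. intros [a <-] h.
  assert (h' : dom c = lob v (lob m a)) by (rewrite h; apply ob_uv, img_m).
  destruct (lens_eq_inv _ _ Huv) as (_ & _ & E).
  specialize (E a c). rewrite (putraw_lcomp u m a c h), (putraw_lcomp v m a c h') in E.
  apply (f_equal (lmor m)) in E. rewrite !(Lputget Hm) in E; auto; apply putraw_dom; auto.
Qed.

Definition kob (p : Ob P) : Ob Q :=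
  if snd (proj1_sig p) then lob u (fst (proj1_sig p)) else lob v (fst (proj1_sig p)).
Definition kmor (q : Mor P) : Mor Q :=
  if snd (proj1_sig q) then lmor u (fst (proj1_sig q)) else lmor v (fst (proj1_sig q)).
Definition kput (p : Ob P) (c : Mor Q) : Mor B :=
  if snd (proj1_sig p) then putraw u (fst (proj1_sig p)) c else putraw v (fst (proj1_sig p)) c.
Lemma kput_dom p c : dom c = kob p -> dom (kput p c) = fst (proj1_sig p).
Proof. unfold kob, kput. destruct (snd (proj1_sig p)); apply putraw_dom. Qed.
Lemma kq_pf (p : Ob P) (c : MorFrom Q (kob p)) :
  img m (dom (fst (kput p (proj1_sig c), snd (proj1_sig p)))) -> snd (kput p (proj1_sig c), snd (proj1_sig p)) = true.
Proof. simpl. rewrite kput_dom by exact (proj2_sig c). exact (proj2_sig p). Qed.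
Definition kq (p : Ob P) (c : MorFrom Q (kob p)) : Mor P := exist _ _ (kq_pf p c).
Lemma kq_dom p c : dom (kq p c) = p.
Proof. apply sig_eq. simpl. rewrite kput_dom by exact (proj2_sig c).
  destruct p as [[]]; reflexivity. Qed.
Definition kL : LensData P Q :=
  {| lob := kob; lmor := kmor; lput := fun p c => exist _ (kq p c) (kq_dom p c) |}.

Lemma k_put p c : dom c = kob p -> proj1_sig (putraw kL p c) = (kput p c, snd (proj1_sig p)).
Proof. intros h. rewrite (putraw_eq kL p c h). reflexivity. Qed.

Lemma kmor_comp (f g : Mor P) : Pcod m f = Pdom m g ->
  kmor (Pcomp m g f) = comp (kmor g) (kmor f).
Proof. intros e. destruct (Pcod_dom m f g e) as [e1 e2].
  unfold kmor at 1. rewrite (Pcomp_eq m f g e). simpl.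
  unfold kmor. rewrite <- e2.
  destruct f as [[f t] hf], g as [[g s] hg]; simpl in *.
  destruct t; simpl.
  - apply (Lcomp Hu); auto.
  - rewrite (Lcomp Hv) by auto. destruct (imgb m (cod f)) eqn:E; auto.
    f_equal. symmetry. apply mor_uv. rewrite <- e1. apply imgbT; auto.
Qed.

Lemma kput_cod x c : kput (Pcod m x) c =
  if snd (proj1_sig x) || imgb m (cod (fst (proj1_sig x)))
  then putraw u (cod (fst (proj1_sig x))) c else putraw v (cod (fst (proj1_sig x))) c.
Proof. unfold kput. rewrite Pcod_eq. reflexivity. Qed.
Lemma kob_cod x : kob (Pcod m x) =
  if snd (proj1_sig x) || imgb m (cod (fst (proj1_sig x)))
  then lob u (cod (fst (proj1_sig x))) else lob v (cod (fst (proj1_sig x))).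
Proof. unfold kob. rewrite Pcod_eq. reflexivity. Qed.

Lemma kcod p b : dom b = kob p -> cod b = kob (Pcod m (putraw kL p b)).
Proof. intros h. rewrite kob_cod, (k_put p b h). simpl. unfold kput.
  destruct p as [[b0 t] hp]; simpl in *. unfold kob in h; simpl in h. destruct t; simpl.
  - apply (Lputcod Hu); auto.
  - destruct (imgb m (cod (putraw v b0 b))) eqn:E.
    + rewrite (Lputcod Hv b0 b h). symmetry. apply ob_uv. apply imgbT; auto.
    + apply (Lputcod Hv); auto.
Qed.

Lemma kL_lens : is_lens kL.
Proof.
  apply is_lens_intro.
  - intros [[f t] hq]. destruct t; simpl; unfold kob, kmor; simpl; [apply (Ldom Hu)|apply (Ldom Hv)].
  - intros [[f t] hq]. destruct t; simpl; unfold kob, kmor; simpl.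
    + apply (Lcod Hu).
    + destruct (imgb m (cod f)) eqn:E; simpl.
      * rewrite (Lcod Hv). symmetry. apply ob_uv. apply imgbT; auto.
      * apply (Lcod Hv).
  - intros [[b t] hp]. destruct t; simpl; unfold kob, kmor; simpl; [apply (Lid Hu)|apply (Lid Hv)].
  - intros f g e. apply kmor_comp. exact e.
  - intros p c h. unfold lmor at 1. simpl. unfold kmor. rewrite k_put by auto. simpl.
    unfold kput. simpl in h. unfold kob in h. destruct (snd (proj1_sig p)).
    + apply (Lputget Hu); auto.
    + apply (Lputget Hv); auto.
  - intros p. apply sig_eq. rewrite k_put by apply dom_idm. simpl.
    unfold kput, kob. destruct p as [[b t] hp]; simpl. destruct t.
    + rewrite (Lputid Hu). reflexivity.
    + rewrite (Lputid Hv). reflexivity.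
  - intros p b b' hb hb'.
    assert (e : Pcod m (putraw kL p b) = Pdom m (putraw kL (Pcod m (putraw kL p b)) b')).
    { symmetry. exact (putraw_dom kL _ b' hb'). }
    apply sig_eq.
    change (proj1_sig (putraw kL p (comp b' b)) = proj1_sig (Pcomp m (putraw kL (Pcod m (putraw kL p b)) b') (putraw kL p b))).
    rewrite (Pcomp_eq m _ _ e).
    assert (hc : dom (comp b' b) = kob p).
    { rewrite dom_comp; auto. rewrite hb'. apply kcod; auto. }
    change (dom b' = kob (Pcod m (putraw kL p b))) in hb'.
    change (dom b = kob p) in hb.
    rewrite (k_put _ b' hb'), (k_put p (comp b' b) hc). simpl.
    rewrite kput_cod. rewrite kob_cod in hb'. rewrite (k_put p b hb) in *. simpl in *.
    unfold kput, kob in *. destruct p as [[b0 t] hp]; simpl in *.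
    destruct t; simpl in *.
    + rewrite (Lputcomp Hu); auto.
    + assert (hb'' : dom b' = lob v (cod (putraw v b0 b))).
      { rewrite hb'. destruct (imgb m (cod (putraw v b0 b))) eqn:E; auto.
        apply ob_uv. apply imgbT; auto. }
      rewrite (Lputcomp Hv); auto.
      destruct (imgb m (cod (putraw v b0 b))) eqn:E; auto.
      rewrite (put_uv (cod (putraw v b0 b)) b'); auto. apply imgbT; auto.
Qed.

Lemma kL_i : lcomp kL (iL m Hm) = u.
Proof.
  apply lens_eq; try reflexivity.
  intros b c h. rewrite (putraw_lcomp kL (iL m Hm) b c h).
  rewrite (iL_put m Hm). 2:{ exact (putraw_dom kL _ c h). }
  rewrite (k_put _ c h). reflexivity.
Qed.

Lemma kL_j : lcomp kL (jL m Hm) = v.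
Proof.
  apply lens_eq.
  - intros b. simpl. unfold kob. simpl. destruct (imgb m b) eqn:E; auto.
    apply ob_uv, imgbT; auto.
  - intros f. simpl. unfold kmor. simpl. destruct (imgb m (dom f)) eqn:E; auto.
    apply mor_uv, imgbT; auto.
  - intros b c h. rewrite (putraw_lcomp kL (jL m Hm) b c h).
    rewrite (jL_put m Hm). 2:{ exact (putraw_dom kL _ c h). }
    rewrite (k_put _ c h). simpl. unfold kput. simpl.
    simpl in h. unfold kob in h. simpl in h.
    destruct (imgb m b) eqn:E; auto.
    apply put_uv; auto. apply imgbT; auto.
Qed.

Lemma P_ob_cases (p : Ob P) :
  (snd (proj1_sig p) = true /\ p = lob (iL m Hm) (fst (proj1_sig p))) \/
  (snd (proj1_sig p) = false /\ p = lob (jL m Hm) (fst (proj1_sig p))).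
Proof. destruct p as [[b t] hp]; simpl. destruct t.
  - left. split; auto. apply sig_eq. reflexivity.
  - right. split; auto. apply sig_eq. simpl. f_equal. symmetry. apply imgbF.
    intros h. specialize (hp h). discriminate.
Qed.
Lemma P_mor_cases (q : Mor P) :
  (snd (proj1_sig q) = true /\ q = lmor (iL m Hm) (fst (proj1_sig q))) \/
  (snd (proj1_sig q) = false /\ q = lmor (jL m Hm) (fst (proj1_sig q))).
Proof. destruct q as [[b t] hp]; simpl. destruct t.
  - left. split; auto. apply sig_eq. reflexivity.
  - right. split; auto. apply sig_eq. simpl. f_equal. symmetry. apply imgbF.
    intros h. specialize (hp h). discriminate.
Qed.

Lemma kL_unique (k' : LensData P Q) : is_lens k' ->
  lcomp k' (iL m Hm) = u -> lcomp k' (jL m Hm) = v -> kL = k'.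
Proof.
  intros Hk Ei Ej.
  destruct (lens_eq_inv _ _ Ei) as (Ei1 & Ei2 & Ei3).
  destruct (lens_eq_inv _ _ Ej) as (Ej1 & Ej2 & Ej3).
  assert (Hob : forall p, lob kL p = lob k' p).
  { intros p. destruct (P_ob_cases p) as [[ht ->]|[ht ->]].
    - exact (eq_sym (Ei1 _)).
    - transitivity (lob v (fst (proj1_sig p))); [|exact (eq_sym (Ej1 _))]. simpl. unfold kob. simpl. destruct (imgb m _) eqn:E; auto.
      apply ob_uv, imgbT; auto. }
  apply lens_eq; auto.
  - intros q. destruct (P_mor_cases q) as [[ht ->]|[ht ->]].
    + exact (eq_sym (Ei2 _)).
    + transitivity (lmor v (fst (proj1_sig q))); [|exact (eq_sym (Ej2 _))]. simpl. unfold kmor. simpl. destruct (imgb m _) eqn:E; auto.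
      apply mor_uv, imgbT; auto.
  - intros p c h. apply sig_eq. rewrite (k_put p c h).
    assert (h' : dom c = lob k' p) by (rewrite h; auto).
    pose proof (putraw_dom k' p c h') as hd.
    destruct (P_ob_cases p) as [[ht E]|[ht E]]; rewrite ht.
    + specialize (Ei3 (fst (proj1_sig p)) c).
      rewrite E in h'. rewrite (putraw_lcomp k' (iL m Hm) _ c h') in Ei3.
      rewrite E in hd. rewrite (iL_put m Hm _ _ hd) in Ei3.
      unfold kput. rewrite ht. rewrite <- Ei3.
      rewrite E. destruct (proj1_sig (putraw k' _ c)) as [x y] eqn:Ex. simpl. f_equal.
      pose proof (domP_snd m Hm _ _ hd) as hs. rewrite Ex in hs. simpl in hs. auto.
    + specialize (Ej3 (fst (proj1_sig p)) c).
      rewrite E in h'. rewrite (putraw_lcomp k' (jL m Hm) _ c h') in Ej3.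
      rewrite E in hd. rewrite (jL_put m Hm _ _ hd) in Ej3.
      unfold kput. rewrite ht. rewrite <- Ej3.
      rewrite E. destruct (proj1_sig (putraw k' _ c)) as [x y] eqn:Ex. simpl. f_equal.
      pose proof (domP_snd m Hm _ _ hd) as hs. rewrite Ex in hs. simpl in hs.
      rewrite hs. symmetry. apply imgbF. intros hi. pose proof (proj2_sig p hi). congruence.
Qed.

End Push.

Lemma pushout_mm {A B : Cat} (m : LensData A B) (Hm : is_lens m) :
  IsPushout m m (iL m Hm) (jL m Hm).
Proof.
  split; [apply iL_lens|]. split; [apply jL_lens|]. split; [apply ij_eq; auto|].
  intros Q u v Hu Hv Huv. exists (kL m Hm u v).
  split.
  - split; [apply kL_lens; auto|]. split; [apply kL_i; auto|apply kL_j; auto].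
  - intros k' (Hk & Ei & Ej). apply kL_unique; auto.
Qed.

Section Equ.
Context {A B X : Cat} (m : LensData A B) (Hm : is_lens m)
  (Hinj : forall a1 a2, lob m a1 = lob m a2 -> a1 = a2)
  (Hrho : forall w, putraw m (dom w) (lmor m w) = w)
  (h : LensData X B) (Hh : is_lens h) (Eh : lcomp (iL m Hm) h = lcomp (jL m Hm) h).

Lemma img_h x : img m (lob h x).
Proof. destruct (lens_eq_inv _ _ Eh) as (E & _).
  specialize (E x). apply (f_equal (fun p => snd (proj1_sig p))) in E. simpl in E.
  apply imgbT. auto. Qed.

Definition ek_ob (x : Ob X) : Ob A :=
  proj1_sig (constructive_indefinite_description _ (img_h x)).
Lemma ek_ob_spec x : lob m (ek_ob x) = lob h x.
Proof. unfold ek_ob. destruct constructive_indefinite_description; simpl; auto. Qed.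
Definition ek_mor (f : Mor X) : Mor A := putraw m (ek_ob (dom f)) (lmor h f).
Lemma ek_put_pf x (c : MorFrom A (ek_ob x)) : dom (putraw h x (lmor m (proj1_sig c))) = x.
Proof. apply putraw_dom. rewrite (Ldom Hm), (proj2_sig c). apply ek_ob_spec. Qed.
Definition ekL : LensData X A :=
  {| lob := ek_ob; lmor := ek_mor;
     lput := fun x c => exist _ _ (ek_put_pf x c) |}.

Lemma ek_put x c : dom c = ek_ob x -> putraw ekL x c = putraw h x (lmor m c).
Proof. intros hc. rewrite (putraw_eq ekL x c hc). reflexivity. Qed.

Lemma hdom f : dom (lmor h f) = lob m (ek_ob (dom f)).
Proof. rewrite (Ldom Hh), ek_ob_spec. reflexivity. Qed.

Lemma ek_cod f : cod (ek_mor f) = ek_ob (cod f).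
Proof. apply Hinj. unfold ek_mor. rewrite <- (Lputcod Hm) by apply hdom.
  rewrite (Lcod Hh), ek_ob_spec. reflexivity. Qed.

Lemma ekL_lens : is_lens ekL.
Proof.
  apply is_lens_intro; simpl.
  - intros f. unfold ek_mor. apply putraw_dom, hdom.
  - apply ek_cod.
  - intros x. unfold ek_mor. rewrite (Lid Hh), dom_idm, <- ek_ob_spec. apply (Lputid Hm).
  - intros f g e. unfold ek_mor. rewrite (dom_comp _ f g e). rewrite (Lcomp Hh) by auto.
    rewrite (Lputcomp Hm).
    + f_equal. f_equal. fold (ek_mor f). rewrite ek_cod, e. reflexivity.
    + apply hdom.
    + rewrite (Ldom Hh). fold (ek_mor f). rewrite ek_cod, e, ek_ob_spec. reflexivity.
  - intros x c hc. rewrite ek_put by auto. unfold ek_mor.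
    assert (hmc : dom (lmor m c) = lob h x) by (rewrite (Ldom Hm), hc; apply ek_ob_spec).
    rewrite (putraw_dom h x _ hmc). rewrite (Lputget Hh) by auto.
    rewrite <- hc. apply Hrho.
  - intros x. rewrite ek_put by apply dom_idm. rewrite (Lid Hm), ek_ob_spec. apply (Lputid Hh).
  - intros x b b' hb hb'.
    rewrite ek_put in hb' by auto.
    assert (hmb : dom (lmor m b) = lob h x) by (rewrite (Ldom Hm), hb; apply ek_ob_spec).
    assert (hcb : cod b = dom b').
    { rewrite hb'. apply Hinj. rewrite <- (Lcod Hm), ek_ob_spec. apply (Lputcod Hh); auto. }
    rewrite !ek_put; auto.
    + rewrite (Lcomp Hm) by auto. rewrite (Lputcomp Hh); auto.
      rewrite (Ldom Hm), hb', ek_ob_spec. reflexivity.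
    + rewrite ek_put by auto. rewrite hb'. reflexivity.
    + rewrite dom_comp; auto.
Qed.

Lemma ek_fact : lcomp m ekL = h.
Proof.
  apply lens_eq.
  - apply ek_ob_spec.
  - intros f. simpl. unfold ek_mor. apply (Lputget Hm). apply hdom.
  - intros x c hc. rewrite (putraw_lcomp m ekL x c hc).
    rewrite ek_put. 2:{ apply putraw_dom; auto. }
    rewrite (Lputget Hm); auto.
Qed.
End Equ.

Lemma mono_effective {A B : Cat} (m : LensData A B) : is_lens m -> Mono m -> EffectiveMono m.
Proof.
  intros Hm M. destruct (mono_facts m Hm M) as [Hinj Hrho].
  exists (PCat m Hm), (iL m Hm), (jL m Hm). split; [apply pushout_mm|].
  split; [exact Hm|]. split; [apply ij_eq; auto|].
  intros X h Hh Eh. exists (ekL m Hm h Eh). split.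
  - split; [apply ekL_lens; auto| apply ek_fact; auto].
  - intros k' [Hk' Ek']. apply M; auto. apply ekL_lens; auto.
    rewrite ek_fact; auto.
Qed.

Theorem corollary5p8 :
  forall (A B : Cat) (m : LensData A B), is_lens m ->
    (Mono m <-> EffectiveMono m) /\
    (Mono m <-> RegularMono m) /\
    (Mono m <-> StrongMono m) /\
    (Mono m <-> ExtremalMono m).
Proof.
  intros A B m Hm.
  assert (ME : Mono m -> EffectiveMono m) by (apply mono_effective; auto).
  assert (ER : EffectiveMono m -> RegularMono m) by apply effective_regular.
  assert (RS : RegularMono m -> StrongMono m) by apply regular_strong.
  assert (SX : StrongMono m -> ExtremalMono m) by (apply strong_extremal; auto).
  assert (XM : ExtremalMono m -> Mono m) by (intros [H _]; exact H).
  split; [|split; [|split]]; split; intros H; auto.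
Qed.
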